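(* Let $S \subseteq \mathbb{R}^r$ be a linear subspace, let $0 \le d \le r$, and let $C(S,d)$ be the associated s-cone. Every nonzero vector $x \in C(S,d)$ is a conformal sum of elementary vectors of $C(S,d)$; that is, there exists a finite set $E \subseteq C(S,d)$ of elementary vectors such that \[ x = \sum_{e \in E} e \quad \text{with } \operatorname{sign}(e) \le \operatorname{sign}(x) \text{ for all } e \in E. \] Moreover, the set $E$ can be chosen such that its elements are linearly independent; in particular, they can be ordered such that every $e \in E$ has a component which is nonzero in $e$ but zero in all its predecessors in the ordering. Then $|E| \le \dim(S)$ and $|E| \le |\operatorname{supp}(x)|$.
   Context: For $x \in \mathbb{R}^n$, $\operatorname{supp}(x) = \{ i \mid x_i \neq 0\}$, and $\operatorname{sign}(x) \in \{-,0,+\}^n$ is obtained by applying the sign function componentwise. The relations $0 < -$ and $0 < +$ induce a partial order on $\{-,0,+\}^n$ (componentwise; $-$ and $+$ are incomparable), and for sign vectors $X \le Y$ means this holds in every component. For a linear subspace $S \subseteq \mathbb{R}^r$ and $0 \le d \le r$, the s-cone is $C(S,d) = \{ (x,y) \in \mathbb{R}^{(r-d)+d} \mid (x,y) \in S,\ y \ge 0\}$ (the last $d$ coordinates are required to be nonnegative). A nonzero vector $e \in C(S,d)$ is called elementary if it is support-minimal: for every nonzero $x' \in C(S,d)$, $\operatorname{supp}(x') \subseteq \operatorname{supp}(e)$ implies $\operatorname{supp}(x') = \operatorname{supp}(e)$. *)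

(* Defs.v *)
From HB Require Import structures.
From mathcomp Require Import all_boot all_order all_algebra.
From mathcomp Require Import reals.
Set Implicit Arguments. Unset Strict Implicit. Unset Printing Implicit Defensive.
Import Order.TTheory GRing.Theory Num.Theory.
Local Open Scope ring_scope.

(* Vectors of R^r are row vectors 'rV[R]_r; coordinate i of x is x 0 i. *)

Definition supp (R : realType) (r : nat) (x : 'rV[R]_r) : {set 'I_r} :=
  [set i | x 0 i != 0].

(* sign vectors: sign(x)_i is represented by Num.sg (x 0 i) in {-1,0,1};
   the partial order 0 < -, 0 < + (- and + incomparable), componentwise *)
Definition sign_le (R : realType) (r : nat) (e x : 'rV[R]_r) : Prop :=
  forall i : 'I_r, Num.sg (e 0 i) = 0 \/ Num.sg (e 0 i) = Num.sg (x 0 i).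

Definition scone (R : realType) (r : nat) (S : {vspace 'rV[R]_r}) (d : nat)
  (x : 'rV[R]_r) : Prop :=
  x \in S /\ forall i : 'I_r, (r - d <= i)%N -> 0 <= x 0 i.

Definition elementary (R : realType) (r : nat) (S : {vspace 'rV[R]_r}) (d : nat)
  (e : 'rV[R]_r) : Prop :=
  [/\ scone S d e, e != 0 &
      forall x' : 'rV[R]_r, scone S d x' -> x' != 0 ->
        supp x' \subset supp e -> supp x' = supp e].

(* Main.v *)
Require Import Defs.
From HB Require Import structures.
From mathcomp Require Import all_boot all_order all_algebra.
From mathcomp Require Import reals.
From mathcomp Require Import ring lra.
From Stdlib Require Import Classical_Prop.
Set Implicit Arguments. Unset Strict Implicit. Unset Printing Implicit Defensive.
Import Order.TTheory GRing.Theory Num.Theory.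
Local Open Scope ring_scope.

Section Aux.
Variables (R : realType) (r : nat) (S : {vspace 'rV[R]_r}) (d : nat).

Definition conf (a b : 'rV[R]_r) := forall i, a 0 i = 0 \/ 0 < a 0 i * b 0 i.

Lemma conf_refl a : conf a a.
Proof. move=> i; have [->|h] := eqVneq (a 0 i) 0; [by left|right].
by rewrite -expr2 exprn_even_gt0. Qed.

Lemma conf_trans a b c : conf a b -> conf b c -> conf a c.
Proof.
move=> hab hbc i; case: (hab i) => [->|h1]; first by left.
right; case: (hbc i) => [h0|h2]; first by rewrite h0 mulr0 ltxx in h1.
nra.
Qed.

Lemma conf_sign a b : conf a b -> sign_le a b.
Proof.
move=> h i; case: (h i) => [->|h1]; first by left; rewrite sgr0.
right; have [ha|ha|ha] := ltrgt0P (a 0 i).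
- have hb : 0 < b 0 i by nra.
  by rewrite (gtr0_sg ha) (gtr0_sg hb).
- have hb : b 0 i < 0 by nra.
  by rewrite (ltr0_sg ha) (ltr0_sg hb).
- by rewrite ha mul0r ltxx in h1.
Qed.

Lemma conf_supp a b : conf a b -> supp a \subset supp b.
Proof.
move=> h; apply/subsetP => i; rewrite !inE => ha.
case: (h i) => [h0|h1]; first by rewrite h0 eqxx in ha.
apply/eqP => hb; by rewrite hb mulr0 ltxx in h1.
Qed.

Lemma conf_scone a b : scone S d b -> a \in S -> conf a b -> scone S d a.
Proof.
move=> [_ hb] ha h; split => // i hi; have := hb i hi.
case: (h i) => [->|h1] //; nra.
Qed.

Lemma nz_coord (a : 'rV[R]_r) : a != 0 -> exists i, a 0 i != 0.
Proof.
move=> ha; apply: NNPP => hn; move/negP: ha; apply; apply/eqP/rowP => i.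
rewrite mxE; apply/eqP; apply: contraT => hi; by case: hn; exists i.
Qed.

Lemma pos_ratio (a b : R) : 0 < a * b -> 0 < a / b.
Proof.
move=> h; have hb : b != 0 by apply/eqP => hb; rewrite hb mulr0 ltxx in h.
have -> : a / b = (a * b) / (b * b) by field.
apply: divr_gt0 => //; rewrite -expr2 exprn_even_gt0 //.
Qed.

Lemma ratio_step (y z : 'rV[R]_r) :
  scone S d y -> scone S d z -> supp z \subset supp y ->
  (exists i, 0 < z 0 i * y 0 i) ->
  exists t, 0 < t /\ [/\ scone S d (y - t *: z), conf (y - t *: z) y &
     exists i1, y 0 i1 != 0 /\ (y - t *: z) 0 i1 = 0].
Proof.
move=> hy hz hzy [i0 hi0].
set P := fun i => 0 < z 0 i * y 0 i.
case: (@arg_minP _ R _ i0 P (fun i => y 0 i / z 0 i) hi0) => i1 Pi1 hmin.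
set t := y 0 i1 / z 0 i1.
have tpos : 0 < t by apply: pos_ratio; rewrite mulrC.
have hc : conf (y - t *: z) y.
  move=> i; rewrite !mxE.
  have [hz0|hzn] := eqVneq (z 0 i) 0.
    by rewrite hz0 mulr0 subr0; apply: conf_refl.
  have hyn : y 0 i != 0.
    by move/subsetP: hzy => /(_ i); rewrite !inE; apply.
  have [hP|hP] := boolP (P i).
  - have := hmin i hP; rewrite -/t => hle.
    have hq : y 0 i = (y 0 i / z 0 i) * z 0 i by rewrite divfK.
    move: hP; rewrite /P => hP.
    set q := y 0 i / z 0 i in hle hq.
    have hge : 0 <= (y 0 i - t * z 0 i) * y 0 i.
      rewrite hq; nra.
    have [h0|h0] := eqVneq (y 0 i - t * z 0 i) 0; [by left|right].
    rewrite lt_def hge andbT mulf_neq0 //.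
  - right; move: hP; rewrite /P => hP.
    have hp : z 0 i * y 0 i <= 0 by rewrite leNgt.
    have hsq : 0 < y 0 i * y 0 i by rewrite -expr2 exprn_even_gt0.
    nra.
have hw : y - t *: z \in S by rewrite memvB ?memvZ //; [case: hy|case: hz].
exists t; split => //; split => //; first exact: conf_scone hy hw hc.
exists i1; split.
  apply/eqP => h; by move: Pi1; rewrite /P h mulr0 ltxx.
have hzn : z 0 i1 != 0 by apply/eqP => h; move: Pi1; rewrite /P h mul0r ltxx.
by rewrite !mxE /t divfK // subrr.
Qed.

Lemma supp_opp (z : 'rV[R]_r) : supp (- z) = supp z.
Proof. by apply/setP => i; rewrite !inE mxE oppr_eq0. Qed.

Lemma supp_scale (t : R) (z : 'rV[R]_r) : t != 0 -> supp (t *: z) = supp z.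
Proof. by move=> ht; apply/setP => i; rewrite !inE mxE mulf_eq0 negb_or ht. Qed.

Lemma smaller (y z : 'rV[R]_r) :
  scone S d y -> scone S d z -> z != 0 -> supp z \subset supp y -> supp z != supp y ->
  exists w, [/\ scone S d w, w != 0, conf w y & (#|supp w| < #|supp y|)%N].
Proof.
move=> hy hz hz0 hzy hne.
have [j hjy hjz] : exists2 j, j \in supp y & j \notin supp z.
  have hp : supp z \proper supp y by rewrite properEneq hne hzy.
  by case/properP: hp => _ [j ? ?]; exists j.
have key : forall z', scone S d z' -> supp z' = supp z -> (exists i, 0 < z' 0 i * y 0 i) ->
  exists w, [/\ scone S d w, w != 0, conf w y & (#|supp w| < #|supp y|)%N].
  move=> z' hz' hs hex.
  have hz'y : supp z' \subset supp y by rewrite hs.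
  have [t [tpos [hw hc [i1 [hi1 hwi1]]]]] := ratio_step hy hz' hz'y hex.
  exists (y - t *: z'); split => //.
  - apply/eqP => h; have := congr1 (fun u : 'rV[R]_r => u 0 j) h.
    rewrite /= !mxE; move: hjz; rewrite -hs inE negbK => /eqP ->.
    rewrite mulr0 subr0 => hyj; by move: hjy; rewrite inE hyj eqxx.
  - apply: proper_card; apply/properP; split; first exact: conf_supp.
    by exists i1; rewrite inE ?hwi1 ?eqxx.
case: (classic (exists i, 0 < z 0 i * y 0 i)) => hex; first by apply: (key z).
have hex' : exists i, 0 < (- z) 0 i * y 0 i.
  have [i hi] := nz_coord hz0; exists i; rewrite mxE.
  have hyi : y 0 i != 0 by move/subsetP: hzy => /(_ i); rewrite !inE; apply.
  have hn : ~ 0 < z 0 i * y 0 i by move=> h; apply: hex; exists i.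
  have hne0 : z 0 i * y 0 i != 0 by rewrite mulf_neq0.
  have : z 0 i * y 0 i < 0 by rewrite lt_neqAle hne0 /= leNgt; apply/negP.
  nra.
have hsc : scone S d (- z).
  split; first by rewrite memvN; case: hz.
  move=> i hi; rewrite mxE.
  have [hz0'|hzn] := eqVneq (z 0 i) 0; first by rewrite hz0' oppr0.
  have hyi : y 0 i != 0 by move/subsetP: hzy => /(_ i); rewrite !inE; apply.
  have hyp : 0 <= y 0 i by case: hy => _; apply.
  have hzp : 0 <= z 0 i by case: hz => _; apply.
  have hn : ~ 0 < z 0 i * y 0 i by move=> h; apply: hex; exists i.
  exfalso; apply: hn; apply: mulr_gt0; by rewrite lt_def ?hzn ?hyi.
exact: (key (- z) hsc (supp_opp z) hex').
Qed.

Lemma exists_elem (x : 'rV[R]_r) : scone S d x -> x != 0 ->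
  exists y, elementary S d y /\ conf y x.
Proof.
move=> hx hx0.
suff H : forall n y, (#|supp y| < n)%N -> scone S d y -> y != 0 -> conf y x ->
  exists e, elementary S d e /\ conf e x.
  exact: (H _ x (ltnSn _) hx hx0 (conf_refl x)).
elim=> [//|n IH] y hn hy hy0 hyx.
case: (classic (exists z, [/\ scone S d z, z != 0, supp z \subset supp y & supp z != supp y])).
  move=> [z [hz hz0 hzy hne]].
  have [w [hw hw0 hwy hlt]] := smaller hy hz hz0 hzy hne.
  apply: (IH w) => //; first exact: leq_trans hlt _.
  exact: conf_trans hwy hyx.
move=> hno; exists y; split => //; split => // z hz hz0 hzy.
apply/eqP; apply: contraT => hne; case: hno; by exists z.
Qed.

Definition Pord (E : seq 'rV[R]_r) := forall k : nat, (k < size E)%N ->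
  exists i : 'I_r, E`_k 0 i != 0 /\ forall j : nat, (j < k)%N -> E`_j 0 i = 0.

Lemma elem_scale t y : 0 < t -> elementary S d y -> elementary S d (t *: y).
Proof.
move=> tp [[hyS hyc] hy0 hmin].
have ht : t != 0 by rewrite gt_eqF.
split.
- split; first by rewrite memvZ.
  by move=> i hi; rewrite mxE mulr_ge0 ?(ltW tp) ?hyc.
- have [k hk] := nz_coord hy0; apply/eqP => h; have := congr1 (fun u : 'rV[R]_r => u 0 k) h; rewrite /= !mxE => /eqP; by rewrite mulf_eq0 (negbTE ht) (negbTE hk).
- move=> z hz hz0; rewrite supp_scale //; exact: hmin.
Qed.

Lemma span_zero (E : seq 'rV[R]_r) i v : (forall e, e \in E -> e 0 i = 0) ->
  v \in <<E>>%VS -> v 0 i = 0.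
Proof.
move=> hE hv.
have := coord_span (X := in_tuple E) hv => ->.
rewrite summxE big1 // => k _; rewrite mxE.
have -> : (in_tuple E)`_k = E`_k by [].
rewrite hE ?mulr0 //; apply: mem_nth; exact: ltn_ord.
Qed.

Lemma main n x : (#|supp x| < n)%N -> scone S d x ->
  exists E : seq 'rV[R]_r,
    [/\ uniq E, forall e, e \in E -> elementary S d e /\ conf e x,
        x = \sum_(e <- E) e, free E & Pord E] /\ (size E <= #|supp x|)%N.
Proof.
elim: n x => [//|n IH] x hn hx.
have [->|hx0] := eqVneq x 0.
  exists [::]; split; last by [].
  split => //; [by rewrite big_nil | exact: nil_free].
have [y [hy hyx]] := exists_elem hx hx0.
have hys : scone S d y by case: hy.
have [i hi] := nz_coord (let: And3 _ h _ := hy in h).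
have hex : exists i, 0 < y 0 i * x 0 i by exists i; case: (hyx i) => // h; rewrite h eqxx in hi.
have [t [tpos [hx' hc [i0 [hi0 hx'i0]]]]] := ratio_step hx hys (conf_supp hyx) hex.
set x' := x - t *: y in hx' hc hx'i0.
have hlt : (#|supp x'| < #|supp x|)%N.
  apply: proper_card; apply/properP; split; first exact: conf_supp.
  by exists i0; rewrite inE ?hx'i0 ?eqxx.
have [E' [[hu hel hsum hfree hP] hsz]] := IH x' (leq_trans hlt hn) hx'.
have hE'0 : forall e, e \in E' -> e 0 i0 = 0.
  move=> e he; case: (hel e he) => _ /(_ i0) [] //; by rewrite hx'i0 mulr0 ltxx.
have hty : (t *: y) 0 i0 = x 0 i0.
  move: hx'i0; rewrite /x' !mxE => /eqP; rewrite subr_eq0 => /eqP ->.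
  by [].
have hty0 : (t *: y) 0 i0 != 0 by rewrite hty.
exists (rcons E' (t *: y)); split; last first.
  by rewrite size_rcons; apply: leq_ltn_trans hlt.
split.
- rewrite rcons_uniq hu andbT; apply/negP => hin.
  by move: hty0; rewrite hE'0 ?eqxx.
- move=> e; rewrite mem_rcons inE => /orP [/eqP ->|he].
    split; first exact: elem_scale.
    move=> j; case: (hyx j) => [h|h]; [left; by rewrite mxE h mulr0|right].
    by rewrite mxE -mulrA mulr_gt0.
  case: (hel e he) => h1 h2; split => //; exact: conf_trans h2 hc.
- rewrite big_rcons /= -hsum /x'; by rewrite subrK.
- have hp : perm_eq (rcons E' (t *: y)) (t *: y :: E').
    by rewrite (perm_rcons (t *: y) E' (t *: y :: E')) perm_refl.
  rewrite (perm_free hp) free_cons hfree andbT.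
  apply/negP => hin; move: hty0; by rewrite (span_zero hE'0 hin) eqxx.
- move=> k; rewrite size_rcons ltnS leq_eqVlt => /orP [/eqP ->|hk].
    exists i0; rewrite nth_rcons ltnn eqxx; split => // j hj.
    rewrite nth_rcons hj; apply: hE'0; exact: mem_nth.
  have [i1 [h1 h2]] := hP k hk; exists i1; rewrite nth_rcons hk; split => // j hj.
  by rewrite nth_rcons (ltn_trans hj hk) h2.
Qed.
End Aux.

Theorem theorem1 (R : realType) (r : nat) (S : {vspace 'rV[R]_r}) (d : nat)
  (hd : (d <= r)%N) (x : 'rV[R]_r) (hx : scone S d x) (hx0 : x != 0) :
  exists E : seq 'rV[R]_r,
    [/\ uniq E,
        forall e, e \in E -> elementary S d e /\ sign_le e x,
        x = \sum_(e <- E) e &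
        free E] /\
    [/\
        (forall k : nat, (k < size E)%N ->
           exists i : 'I_r, E`_k 0 i != 0 /\
             forall j : nat, (j < k)%N -> E`_j 0 i = 0),
        (size E <= \dim S)%N &
        (size E <= #|supp x|)%N].
Proof.
have [E [[hu hel hsum hfree hP] hsz]] := main (ltnSn _) hx.
exists E; split; split => //.
- move=> e he; case: (hel e he) => h1 h2; split => //; exact: conf_sign.
- move/eqP: hfree => <-; apply: dimvS; apply/span_subvP => e he.
  by case: (hel e he) => [[[]]].
Qed.
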